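(* Let $b \geq 2$ be an integer and let $A_b \subseteq \mathbb{N}$ be the set of all natural numbers whose base-$b$ representation begins with the digit $1$. Then $A_b$ is fractionally dense if $b \in \{2,3,4\}$, and $A_b$ is not fractionally dense if $b \geq 5$.
   Context: $\mathbb{N} = \{1,2,3,\ldots\}$. For $A \subseteq \mathbb{N}$, the quotient set is $R(A) = \{a/a' : a, a' \in A\}$. A set $A \subseteq \mathbb{N}$ is called fractionally dense if the closure of $R(A)$ in $\mathbb{R}$ equals $[0,\infty)$. *)

(* Defs.v *)
From Stdlib Require Import Reals Lra Lia.
Open Scope R_scope.

(* Subsets of N = {1,2,3,...} are predicates on nat; membership requires n >= 1. *)

Definition quotient_set (A : nat -> Prop) (r : R) : Prop :=
  exists a a' : nat, (1 <= a)%nat /\ (1 <= a')%nat /\ A a /\ A a' /\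
    r = INR a / INR a'.

Definition closure_R (S : R -> Prop) (x : R) : Prop :=
  forall eps : R, 0 < eps -> exists y : R, S y /\ Rabs (y - x) < eps.

Definition fractionally_dense (A : nat -> Prop) : Prop :=
  forall x : R, closure_R (quotient_set A) x <-> 0 <= x.

(* Positive integers whose base-b representation begins with digit 1:
   n >= 1 and b^k <= n < 2 * b^k for some k. *)
Definition leading_digit_one (b : nat) (n : nat) : Prop :=
  (1 <= n)%nat /\ exists k : nat, (b ^ k <= n < 2 * b ^ k)%nat.

(* Main.v *)
Require Import Defs.
From Stdlib Require Import Reals Lra Lia ZArith.

Lemma floor_ex (X : R) : 0 <= X -> exists n : nat, INR n <= X < INR n + 1.
Proof.
  intros HX. destruct (archimed X) as [H1 H2].
  set (z := (up X - 1)%Z).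
  assert (Hz : IZR z = IZR (up X) - 1) by (unfold z; rewrite minus_IZR; reflexivity).
  assert (Hz0 : (0 <= z)%Z).
  { assert (IZR (-1) < IZR z) by (rewrite Hz; simpl; lra).
    apply lt_IZR in H. lia. }
  exists (Z.to_nat z). rewrite INR_IZR_INZ, Z2Nat.id by exact Hz0. lra.
Qed.

Lemma pow_big (b : nat) (M : R) : (2 <= b)%nat -> exists j, M < INR (b ^ j).
Proof.
  intros Hb. destruct (floor_ex (Rmax M 0)) as [n Hn]. apply Rmax_r.
  exists (S n). assert (S n < b ^ S n)%nat by (apply Nat.pow_gt_lin_r; lia).
  apply lt_INR in H. rewrite S_INR in H. pose proof (Rmax_l M 0). lra.
Qed.

Lemma log_ex (b n : nat) : (2 <= b)%nat -> (1 <= n)%nat ->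
  exists k, (b ^ k <= n < b ^ S k)%nat.
Proof.
  intros Hb. induction n as [|n IH]; intros Hn. lia.
  destruct (Nat.eq_dec n 0) as [->|Hn0].
  - exists 0%nat. simpl. lia.
  - destruct IH as [k Hk]. lia.
    destruct (Nat.eq_dec (S n) (b ^ S k)) as [E|E].
    + exists (S k). split. lia. rewrite E. apply Nat.pow_lt_mono_r; lia.
    + exists k. lia.
Qed.

Lemma ratio_nonneg (A : nat -> Prop) y : quotient_set A y -> 0 <= y.
Proof.
  intros (a & a' & Ha & Ha' & _ & _ & ->).
  unfold Rdiv. apply Rmult_le_pos. apply pos_INR. left. apply Rinv_0_lt_compat. apply lt_0_INR. lia.
Qed.

Lemma closure_nonneg (A : nat -> Prop) x : closure_R (quotient_set A) x -> 0 <= x.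
Proof.
  intros H. destruct (Rle_or_lt 0 x) as [h|h]; auto.
  destruct (H (-x)) as [y [Hy Hyx]]. lra.
  pose proof (ratio_nonneg _ _ Hy). rewrite Rabs_right in Hyx; lra.
Qed.

Lemma pow_pos_nat b j : (2 <= b)%nat -> (1 <= b ^ j)%nat.
Proof. intros. assert (b ^ j <> 0)%nat by (apply Nat.pow_nonzero; lia). lia. Qed.

Lemma approx u v N eps : 0 < N -> Rabs (u - v * N) < eps * N -> Rabs (u / N - v) < eps.
Proof.
  intros HN H. replace (u / N - v) with ((u - v * N) * / N) by (field; lra).
  rewrite Rabs_mult, Rabs_inv, (Rabs_right N) by lra.
  apply Rmult_lt_reg_r with N; auto. rewrite Rmult_assoc, Rinv_l; lra.
Qed.

Theorem mainTheorem1 : forall b : nat, (2 <= b)%nat ->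
  ((b <= 4)%nat -> fractionally_dense (leading_digit_one b)) /\
  ((5 <= b)%nat -> ~ fractionally_dense (leading_digit_one b)).
Proof.
  intros b Hb. split.
  - intros Hb4 x. split. apply closure_nonneg.
    intros Hx eps Heps.
    destruct (Req_dec x 0) as [Hx0|Hx0].
    + subst x. destruct (pow_big b (/ eps) Hb) as [j Hj].
      pose proof (pow_pos_nat b j Hb).
      exists (1 / INR (b ^ j)). split.
      * exists 1%nat, (b ^ j)%nat. repeat split; try lia.
        exists 0%nat. simpl. lia. exists j. lia.
      * assert (0 < INR (b ^ j)) by (apply lt_0_INR; lia).
        rewrite Rminus_0_r, Rabs_right.
        2: { apply Rle_ge; unfold Rdiv; apply Rmult_le_pos; [lra|left; apply Rinv_0_lt_compat; lra]. }
        apply Rmult_lt_reg_r with (INR (b ^ j)); auto.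
        replace (1 / INR (b ^ j) * INR (b ^ j)) with 1 by (field; lra).
        apply Rmult_lt_reg_l with (/ eps). apply Rinv_0_lt_compat; lra.
        rewrite <- Rmult_assoc, Rinv_l, Rmult_1_l, Rmult_1_r; lra.
    + assert (Hxp : 0 < x) by lra.
      destruct (pow_big b ((x + 1) / eps + 1 / x) Hb) as [j Hj].
      pose proof (pow_pos_nat b j Hb) as Hj1.
      set (N := INR (b ^ j)) in *.
      assert (HN1 : 1 <= N) by (unfold N; apply (le_INR 1); lia).
      assert (Hpe : 0 <= (x + 1) / eps) by (apply Rlt_le, Rdiv_lt_0_compat; lra).
      assert (Hpx : 0 <= 1 / x) by (apply Rlt_le, Rdiv_lt_0_compat; lra).
      assert (HNe : x + 1 < eps * N).
      { assert ((x + 1) / eps < N) by lra.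
        apply Rmult_lt_compat_l with (r := eps) in H; auto.
        replace (eps * ((x + 1) / eps)) with (x + 1) in H by (field; lra). lra. }
      assert (HX : 1 < x * N).
      { assert (1 / x < N) by lra.
        apply Rmult_lt_compat_l with (r := x) in H; auto.
        replace (x * (1 / x)) with 1 in H by (field; lra). lra. }
      destruct (floor_ex (x * N)) as [n Hn]. lra.
      assert (Hn1 : (1 <= n)%nat).
      { assert (INR 0 < INR n) by (simpl; lra). apply INR_lt in H. lia. }
      destruct (log_ex b n Hb Hn1) as [k Hk].
      destruct (lt_dec n (2 * b ^ k)) as [Hin|Hout].
      * exists (INR n / N). split.
        -- exists n, (b ^ j)%nat. repeat split; try lia. exists k; lia. exists j; lia.
        -- apply approx. lra. apply Rabs_def1; lra.
      * destruct (floor_ex (2 * (x * N))) as [m Hm]. lra.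
        assert (Hm1 : (2 * n <= m < 2 * n + 2)%nat).
        { split.
          - assert (INR (2 * n) < INR (m + 1)) by (rewrite mult_INR, plus_INR; simpl; lra).
            apply INR_lt in H. lia.
          - assert (INR m < INR (2 * n + 2)) by (rewrite plus_INR, mult_INR; simpl; lra).
            apply INR_lt in H. lia. }
        assert (HD : INR (2 * b ^ j - 1) = 2 * N - 1).
        { rewrite minus_INR by lia. rewrite mult_INR. fold N. simpl. lra. }
        exists (INR m / INR (2 * b ^ j - 1)). split.
        -- exists m, (2 * b ^ j - 1)%nat. repeat split; try lia.
           exists (S k). rewrite Nat.pow_succ_r' in *. nia.
           exists j; lia.
        -- rewrite HD. apply approx. lra.
           apply Rabs_def1.
           ++ assert (eps * N <= eps * (2 * N - 1)) by (apply Rmult_le_compat_l; lra). lra.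
           ++ assert (eps * N <= eps * (2 * N - 1)) by (apply Rmult_le_compat_l; lra). lra.
  - intros Hb5 HD.
    pose proof (le_INR _ _ Hb5) as Hb5R. simpl in Hb5R.
    set (x := 1 + INR b / 4).
    assert (Hc : closure_R (quotient_set (leading_digit_one b)) x)
      by (apply HD; unfold x; lra).
    destruct (Hc (INR b / 4 - 1)) as [y [Hy Hyx]]. lra.
    destruct Hy as (a & a' & Ha & Ha' & [_ [k Hk]] & [_ [j Hj]] & ->).
    assert (Ha'R : 0 < INR a') by (apply lt_0_INR; lia).
    apply Rabs_def2 in Hyx. unfold x in Hyx.
    destruct (le_lt_dec k j) as [Hkj|Hkj].
    + assert (b ^ k <= b ^ j)%nat by (apply Nat.pow_le_mono_r; lia).
      assert (a < 2 * a')%nat by lia.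
      apply lt_INR in H0. rewrite mult_INR in H0. simpl in H0.
      assert (INR a / INR a' < 2).
      { apply Rmult_lt_reg_r with (INR a'); auto.
        unfold Rdiv. rewrite Rmult_assoc, Rinv_l; lra. }
      lra.
    + assert (b ^ S j <= b ^ k)%nat by (apply Nat.pow_le_mono_r; lia).
      rewrite Nat.pow_succ_r' in H.
      assert (b * a' < 2 * a)%nat by nia.
      apply lt_INR in H0. rewrite !mult_INR in H0. simpl in H0.
      assert (INR b / 2 < INR a / INR a').
      { apply Rmult_lt_reg_r with (2 * INR a'). lra.
        unfold Rdiv. replace (INR a * / INR a' * (2 * INR a')) with (2 * INR a)
          by (field; lra). lra. }
      lra.
Qed.
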